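(* Consider the two matrix ODEs \[ \text{(A)}\quad \dot E=-G_\varepsilon(E)+\langle G_\varepsilon(E),E\rangle E, \] \[ \text{(B)}\quad \dot Y=-P_YR_\varepsilon(E)+\langle P_YR_\varepsilon(E),E\rangle Y,\qquad E=\Pi_{\mathcal{S}}Y . \] 1. Let $E_\star\in\mathcal{E}_1$ be a stationary point of (A). Assume that $\lambda_k$ and $\lambda_{k+1}$ of $L(W+\varepsilon E_\star)$ are simple, that $G_\varepsilon(E_\star)\neq0$, and that $R_\varepsilon(E_\star)$ has rank $4$. Then there is a symmetric matrix $Y_\star\in\mathcal{M}_4$ with $E_\star=\Pi_{\mathcal{S}}Y_\star$ that is a stationary point of (B). 2. Conversely, let $Y_\star\in\mathcal{M}_4$ be a symmetric stationary point of (B), and set $E_\star=\Pi_{\mathcal{S}}Y_\star$ and $R_\star=R_\varepsilon(E_\star)$. Assume that $\|E_\star\|_F=1$, that $\lambda_k$ and $\lambda_{k+1}$ of $L(W+\varepsilon E_\star)$ are simple, that $R_\star$ has rank $4$, and that $P_{Y_\star}R_\star\neq0$. Then: - $P_{Y_\star}R_\star=R_\star$; - $Y_\star$ is a nonzero real multiple of $R_\star$; - $E_\star$ is a stationary point of (A).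
   Context: A stationary point of an ODE $\dot X=f(X)$ is a point where $f(X)=0$. Let $\mathscr{E}\subseteq\{1,\dots,n\}^2$ be a symmetric edge set, and let $W\in\mathbb{R}^{n\times n}$ be symmetric, entrywise non-negative, with $w_{ij}=0$ for $(i,j)\notin\mathscr{E}$. Let $L(A)=\mathrm{diag}(A\mathbb{1})-A$ with $\mathbb{1}=(1,\dots,1)^T$. Eigenvalues are ordered $\lambda_1\le\dots\le\lambda_n$. The inner product is $\langle X,Y\rangle=\mathrm{trace}(X^TY)$ and $\|\cdot\|_F$ is the Frobenius norm. Let $\mathcal{S}=\{A: a_{ij}=0\ \forall (i,j)\notin\mathscr{E}\}$, with orthogonal projection $\Pi_{\mathcal{S}}$ (zeroing the entries outside $\mathscr{E}$). Let $\mathcal{E}=\mathcal{S}\cap\mathrm{Sym}(\mathbb{R}^{n\times n})$ and $\mathcal{E}_1=\{E\in\mathcal{E}:\|E\|_F=1\}$. Fix $k\in\{2,\dots,n-1\}$ and $\varepsilon>0$. For $E\in\mathcal{E}$ with $\lambda_k,\lambda_{k+1}$ of $L(W+\varepsilon E)$ simple, define the following objects. - $x$ and $y$ are unit eigenvectors for $\lambda_{k+1}$ and $\lambda_k$ respectively. - $z=x\bullet x-y\bullet y$, the componentwise product. - $R_\varepsilon(E)=\tfrac12(z\mathbb{1}^T+\mathbb{1}z^T)-xx^T+yy^T$. - $G_\varepsilon(E)=\Pi_{\mathcal{S}}R_\varepsilon(E)$. $\mathcal{M}_4$ is the manifold of real $n\times n$ matrices of rank exactly 4. $P_Y$ is the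 orthogonal projection onto $T_Y\mathcal{M}_4$. For symmetric $Y=USU^T$, with $U\in\mathbb{R}^{n\times4}$ having orthonormal columns and $S$ symmetric invertible, it is $P_YA=A-(I_n-UU^T)A(I_n-UU^T)$. *)

(* Defs.v *)
From HB Require Import structures.
From mathcomp Require Import all_boot all_order all_algebra reals.
From Stdlib Require Import ClassicalEpsilon.
Set Implicit Arguments.
Unset Strict Implicit.
Unset Printing Implicit Defensive.
Import Order.TTheory GRing.Theory Num.Theory.
Local Open Scope ring_scope.

Section Defs.
Variables (R : realType) (n : nat).

Definition frob_inner (X Y : 'M[R]_n) : R := \tr (X^T *m Y).
Definition frob_norm (X : 'M[R]_n) : R := Num.sqrt (frob_inner X X).

Definition laplacian (A : 'M[R]_n) : 'M[R]_n :=
  \matrix_(i, j) ((i == j)%:R * (\sum_l A i l)) - A.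

Definition PiS (Ed : {set 'I_n * 'I_n}) (A : 'M[R]_n) : 'M[R]_n :=
  \matrix_(i, j) (if (i, j) \in Ed then A i j else 0).

Definition in_calE (Ed : {set 'I_n * 'I_n}) (E : 'M[R]_n) : Prop :=
  E^T = E /\ (forall i j, (i, j) \notin Ed -> E i j = 0).
Definition in_calE1 (Ed : {set 'I_n * 'I_n}) (E : 'M[R]_n) : Prop :=
  in_calE Ed E /\ frob_norm E = 1.

Definition is_sorted_spectrum (A : 'M[R]_n) (s : seq R) : Prop :=
  sorted <=%R s /\ char_poly A = \prod_(a <- s) ('X - a%:P).

(* The sorted eigenvalue list (exists and is unique for symmetric A). *)
Definition spectrum (A : 'M[R]_n) : seq R :=
  epsilon (inhabits [::]) (is_sorted_spectrum A).

(* lambda_j(A), 1-indexed: lambda_1 <= ... <= lambda_n. *)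
Definition eigval (A : 'M[R]_n) (j : nat) : R := (spectrum A)`_(j.-1).

Definition simple_eig (A : 'M[R]_n) (j : nat) : Prop :=
  count_mem (eigval A j) (spectrum A) = 1%N.

Definition unit_eigvec (A : 'M[R]_n) (a : R) : 'cV[R]_n :=
  epsilon (inhabits 0)
    (fun v : 'cV[R]_n => A *m v = a *: v /\ \sum_i v i 0 ^+ 2 = 1).

Variables (W : 'M[R]_n) (eps : R) (k : nat).

Definition Reps (E : 'M[R]_n) : 'M[R]_n :=
  let A := laplacian (W + eps *: E) in
  let x := unit_eigvec A (eigval A k.+1) in
  let y := unit_eigvec A (eigval A k) in
  let z := fun i => x i 0 ^+ 2 - y i 0 ^+ 2 in
  \matrix_(i, j) ((z i + z j) / 2) - x *m x^T + y *m y^T.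

Definition Geps (Ed : {set 'I_n * 'I_n}) (E : 'M[R]_n) : 'M[R]_n :=
  PiS Ed (Reps E).

(* Projection onto the tangent space T_Y M_4 for symmetric Y = U S U^T. *)
Definition tan_factor (Y : 'M[R]_n) : 'M[R]_(n, 4) :=
  epsilon (inhabits 0)
    (fun U : 'M[R]_(n, 4) => U^T *m U = 1%:M /\
       exists S : 'M[R]_4, S^T = S /\ S \in unitmx /\ Y = U *m S *m U^T).

Definition PY (Y A : 'M[R]_n) : 'M[R]_n :=
  let U := tan_factor Y in
  A - (1%:M - U *m U^T) *m A *m (1%:M - U *m U^T).

Definition fieldA (Ed : {set 'I_n * 'I_n}) (E : 'M[R]_n) : 'M[R]_n :=
  - Geps Ed E + frob_inner (Geps Ed E) E *: E.

Definition fieldB (Ed : {set 'I_n * 'I_n}) (Y : 'M[R]_n) : 'M[R]_n :=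
  let E := PiS Ed Y in
  - PY Y (Reps E) + frob_inner (PY Y (Reps E)) E *: Y.

Definition stationaryA (Ed : {set 'I_n * 'I_n}) (E : 'M[R]_n) : Prop :=
  fieldA Ed E = 0.
Definition stationaryB (Ed : {set 'I_n * 'I_n}) (Y : 'M[R]_n) : Prop :=
  fieldB Ed Y = 0.

End Defs.

(* Main.v *)
Require Import Defs.
From HB Require Import structures.
From mathcomp Require Import all_boot all_order all_algebra reals.
From Stdlib Require Import ClassicalEpsilon.
Import Order.TTheory GRing.Theory Num.Theory.
Local Open Scope ring_scope.
Set Implicit Arguments.
Unset Strict Implicit.

Lemma gs (R : realType) n m (A : 'M[R]_(m, n)) :
  exists r (B : 'M[R]_(r, n)), B *m B^T = 1%:M /\ (A <= B)%MS /\ (B <= A)%MS.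
Proof.
elim: m A => [|m IH] A.
  exists 0%N, 0; split; first by apply/matrixP => [[]].
  by rewrite (flatmx0 A) !sub0mx.
pose A' : 'M[R]_(1 + m, n) := A.
pose a := usubmx A'; pose A1 := dsubmx A'.
have eA : A = col_mx a A1 by rewrite vsubmxK.
have [sa sA1] : (a <= A)%MS /\ (A1 <= A)%MS.
  by have := submx_refl (col_mx a A1); rewrite col_mx_sub -eA => /andP.
have [r [B1 [HB1 [sAB1 sB1A]]]] := IH A1.
have sB1A' : (B1 <= A)%MS := submx_trans sB1A sA1.
pose w := a - a *m B1^T *m B1.
case: (eqVneq w 0) => [w0|wn0].
  exists r, B1; split => //; split => //.
  rewrite eA (col_mx_sub a A1) sAB1 andbT.
  move/eqP: w0; rewrite subr_eq0 => /eqP ->; exact: submxMl.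
pose s := Num.sqrt ((w *m w^T) 0 0).
have ww : (w *m w^T) 0 0 = \sum_j w 0 j ^+ 2.
  by rewrite !mxE; apply: eq_bigr => j _; rewrite !mxE expr2.
have wpos : 0 < (w *m w^T) 0 0.
  rewrite ww lt_def sumr_ge0 ?andbT => [|j _]; last exact: sqr_ge0.
  apply/negP => /eqP/psumr_eq0P H; apply/negP: wn0; rewrite negbK.
  apply/eqP/matrixP => i j; rewrite (ord1 i) [RHS]mxE.
  apply/eqP; rewrite -sqrf_eq0; apply/eqP; apply: H => // k _; exact: sqr_ge0.
have s0 : s != 0 by rewrite sqrtr_eq0 -ltNge.
pose b := s^-1 *: w.
have B1w : B1 *m w^T = 0.
  rewrite /w linearB /= !trmx_mul trmxK mulmxBr !mulmxA HB1 mul1mx subrr //.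
exists (1 + r)%N, (col_mx b B1); split; last split.
- rewrite tr_col_mx mul_col_row HB1 (scalar_mx_block 1 r).
  have -> : B1 *m b^T = 0 by rewrite /b linearZ /= -scalemxAr B1w scaler0.
  have -> : b *m B1^T = 0 by rewrite -(trmxK (b *m _)) trmx_mul trmxK
     /b linearZ /= -scalemxAr B1w scaler0 linear0.
  congr block_mx; apply/matrixP => i j; rewrite (ord1 i) (ord1 j) /b.
  rewrite linearZ /= -scalemxAr -scalemxAl scalerA mxE [RHS]mxE /=.
  by rewrite -invfM -expr2 sqr_sqrtr ?mulVf ?gt_eqF // ltW.
- have := submx_refl (col_mx b B1); rewrite col_mx_sub => /andP[h1 h2].
  rewrite eA (col_mx_sub a A1) (submx_trans sAB1 h2) andbT.
  have ea : a = s *: b + a *m B1^T *m B1.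
    by rewrite /b scalerA mulfV // scale1r subrK.
  rewrite ea addmx_sub //; first by rewrite scalemx_sub.
  apply: submx_trans h2; exact: submxMl.
- rewrite col_mx_sub sB1A' andbT /b scalemx_sub // /w.
  rewrite addmx_sub // -scaleN1r scalemx_sub //.
  exact: submx_trans (submxMl _ _) sB1A'.
Qed.

Lemma sym_factor (R : realType) n (Y : 'M[R]_n) : Y^T = Y -> \rank Y = 4%N ->
  exists U : 'M[R]_(n, 4), U^T *m U = 1%:M /\
    exists S : 'M[R]_4, S^T = S /\ S \in unitmx /\ Y = U *m S *m U^T.
Proof.
move=> Ys Yr.
have [r [B [HB [sYB sBY]]]] := gs Y.
have rB : \rank B = r.
  apply/eqP; rewrite eqn_leq rank_leq_row /=.
  by rewrite -{1}(mxrank1 R r) -HB mxrankM_maxl.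
have rr : r = 4%N by rewrite -rB -Yr; apply/eqP; rewrite eqn_leq !mxrankS.
subst r.
have YBB : Y *m B^T *m B = Y.
  have := mulmxKpV sYB; move: (Y *m pinvmx B) => X eYX.
  by rewrite -{1}eYX -(mulmxA X B) HB mulmx1.
have BBY : B^T *m B *m Y = Y.
  by rewrite -{2}Ys -{2}YBB !trmx_mul trmxK Ys mulmxA.
exists B^T; rewrite trmxK; split => //.
exists (B *m Y *m B^T); split; last split.
- by rewrite !trmx_mul trmxK Ys mulmxA.
- have eY : Y = B^T *m (B *m Y *m B^T) *m B.
    by rewrite !mulmxA BBY YBB.
  rewrite -row_free_unit /row_free; apply/eqP/anti_leq.
  rewrite rank_leq_row /= -[X in (X <= _)%N]Yr {1}eY.
  by apply: leq_trans (mxrankM_maxl _ _) (mxrankM_maxr _ _).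
- by rewrite !mulmxA BBY YBB.
Qed.

Lemma PiS_scale (R : realType) n (Ed : {set 'I_n * 'I_n}) (c : R) (A : 'M[R]_n) :
  PiS Ed (c *: A) = c *: PiS Ed A.
Proof. by apply/matrixP => i j; rewrite !mxE; case: ifP; rewrite ?mulr0. Qed.

Lemma frob_PiS (R : realType) n (Ed : {set 'I_n * 'I_n}) (A B : 'M[R]_n) :
  frob_inner (PiS Ed A) (PiS Ed B) = frob_inner A (PiS Ed B).
Proof.
rewrite /frob_inner /mxtrace; apply: eq_bigr => i _; rewrite !mxE.
apply: eq_bigr => j _; rewrite !mxE; case: ifP => _ //; by rewrite !mulr0.
Qed.

Lemma frob_scale (R : realType) n (c : R) (A B : 'M[R]_n) :
  frob_inner A (c *: B) = c * frob_inner A B.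
Proof. by rewrite /frob_inner -scalemxAr linearZ. Qed.

Lemma Reps_sym (R : realType) n (W : 'M[R]_n) eps k E :
  (Reps W eps k E)^T = Reps W eps k E.
Proof.
rewrite /Reps /= !linearD !linearN /= !trmx_mul !trmxK; congr (_ - _ + _).
by apply/matrixP => i j; rewrite !mxE addrC.
Qed.

Lemma tanP (R : realType) n (Y : 'M[R]_n) : Y^T = Y -> \rank Y = 4%N ->
  let U := tan_factor Y in
  U^T *m U = 1%:M /\ (1%:M - U *m U^T) *m Y = 0 /\ Y *m (1%:M - U *m U^T) = 0.
Proof.
move=> Ys Yr U.
have [UU [S [_ [_ eY]]]] : U^T *m U = 1%:M /\
    exists S : 'M[R]_4, S^T = S /\ S \in unitmx /\ Y = U *m S *m U^T.
  exact: (epsilon_spec (inhabits 0) _ (sym_factor Ys Yr)).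
split => //; rewrite eY; split.
  by rewrite mulmxBl mul1mx !mulmxA -(mulmxA U (U^T)) UU mulmx1 subrr.
by rewrite mulmxBr mulmx1 -!mulmxA (mulmxA U^T) UU mul1mx subrr.
Qed.

Lemma Qidem (R : realType) n (U : 'M[R]_(n, 4)) : U^T *m U = 1%:M ->
  (1%:M - U *m U^T) *m (1%:M - U *m U^T) = 1%:M - U *m U^T.
Proof.
move=> UU; rewrite mulmxBl mul1mx mulmxBr mulmx1 -mulmxA (mulmxA U^T) UU mul1mx.
by rewrite subrr subr0.
Qed.

Unset Implicit Arguments.
Theorem theorem4p3 (R : realType) (n : nat) (Ed : {set 'I_n * 'I_n})
  (W : 'M[R]_n) (k : nat) (eps : R)
  (HEd : forall i j, (i, j) \in Ed -> (j, i) \in Ed)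
  (HWsym : W^T = W) (HWnn : forall i j, 0 <= W i j)
  (HWsupp : forall i j, (i, j) \notin Ed -> W i j = 0)
  (Hk : (2 <= k <= n.-1)%N) (Heps : 0 < eps) :
  (forall Es : 'M[R]_n,
     in_calE1 Ed Es ->
     stationaryA W eps k Ed Es ->
     simple_eig (laplacian (W + eps *: Es)) k ->
     simple_eig (laplacian (W + eps *: Es)) k.+1 ->
     Geps W eps k Ed Es != 0 ->
     \rank (Reps W eps k Es) = 4%N ->
     exists Ys : 'M[R]_n,
       [/\ Ys^T = Ys, \rank Ys = 4%N, Es = PiS Ed Ys & stationaryB W eps k Ed Ys])
  /\
  (forall Ys : 'M[R]_n,
     Ys^T = Ys -> \rank Ys = 4%N ->
     stationaryB W eps k Ed Ys ->
     let Es := PiS Ed Ys in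
     let Rs := Reps W eps k Es in
     frob_norm Es = 1 ->
     simple_eig (laplacian (W + eps *: Es)) k ->
     simple_eig (laplacian (W + eps *: Es)) k.+1 ->
     \rank Rs = 4%N ->
     PY Ys Rs != 0 ->
     [/\ PY Ys Rs = Rs,
         exists c : R, c != 0 /\ Ys = c *: Rs
       & stationaryA W eps k Ed Es]).
Proof.
Proof.
split.
- move=> Es [[EsT Esupp] Esn] HA _ _ HG HR.
  set G := Geps W eps k Ed Es in HA HG *.
  move: HA; rewrite /stationaryA /fieldA -/G => /eqP; rewrite addrC subr_eq0 => /eqP.
  set a := frob_inner G Es => GE.
  have a0 : a != 0 by apply: contraNneq HG => a0; rewrite -GE a0 scale0r.
  have EsP : PiS Ed Es = Es.
    by apply/matrixP => i j; rewrite mxE; case: ifPn => // /Esupp ->.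
  pose Ys := a^-1 *: Reps W eps k Es.
  have YsE : PiS Ed Ys = Es.
    by rewrite /Ys PiS_scale -[PiS Ed _]/G -GE scalerA mulVf // scale1r.
  have YsT : Ys^T = Ys by rewrite /Ys linearZ /= Reps_sym.
  have Yr : \rank Ys = 4%N by rewrite mxrank_scale_nz ?invr_eq0.
  exists Ys; split => //.
  have [_ [QY _]] := tanP YsT Yr.
  have eR : Reps W eps k Es = a *: Ys by rewrite /Ys scalerA mulfV // scale1r.
  have PYR : PY Ys (Reps W eps k Es) = Reps W eps k Es.
    by rewrite /PY /= {2}eR -scalemxAr QY scaler0 mul0mx subr0.
  rewrite /stationaryB /fieldB /= YsE PYR.
  have := frob_PiS Ed (Reps W eps k Es) Es; rewrite EsP => fa.
  rewrite -fa -/G -/a eR scalerA mulfV // scale1r addNr //.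
- move=> Ys YsT Yr HB Es Rs Esn _ _ Rr PYn.
  have [UU [QY YQ]] := tanP YsT Yr.
  set U := tan_factor Ys in UU QY YQ.
  set Q := 1%:M - U *m U^T in QY YQ.
  have QQ : Q *m Q = Q := Qidem UU.
  set P := PY Ys Rs in PYn *.
  have PE : P = Rs - Q *m Rs *m Q by [].
  have HB' : - P + frob_inner P Es *: Ys = 0 := HB.
  clearbody P Q.
  move: HB'; set b := frob_inner P Es.
  move/eqP; rewrite addrC subr_eq0 => /eqP PbY; symmetry in PbY.
  have b0 : b != 0 by apply: contraNneq PYn => b0; rewrite PbY b0 scale0r.
  have QP : Q *m P = 0 by rewrite PbY -scalemxAr QY scaler0.
  have PQ : P *m Q = 0 by rewrite PbY -scalemxAl YQ scaler0.
  have QR : Q *m Rs = Q *m Rs *m Q.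
    by move: QP; rewrite PE mulmxBr !mulmxA QQ => /eqP; rewrite subr_eq0 => /eqP.
  have PR : P = (1%:M - Q) *m Rs by rewrite PE mulmxBl mul1mx -QR.
  have sPR : (P <= Rs)%MS by rewrite PR submxMl.
  have rP : \rank P = 4%N by rewrite PbY mxrank_scale_nz.
  have /andP[_ sRP] : (P == Rs)%MS by rewrite -(mxrank_leqif_eq sPR).2 rP Rr.
  have RQ : Rs *m Q = 0.
    have := mulmxKpV sRP; move: (Rs *m pinvmx P) => X <-.
    by rewrite -mulmxA PQ mulmx0.
  have PRs : P = Rs by rewrite PE -mulmxA RQ mulmx0 subr0.
  have eY : Ys = b^-1 *: Rs by rewrite -PRs PbY scalerA mulVf // scale1r.
  split => //.
    by exists b^-1; split; rewrite ?invr_eq0.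
  have EsG : Es = b^-1 *: PiS Ed Rs by rewrite /Es {1}eY PiS_scale.
  have fb : frob_inner (PiS Ed Rs) Es = b by rewrite /b PRs /Es frob_PiS.
  rewrite /stationaryA /fieldA /Geps -/Rs fb EsG scalerA mulfV // scale1r addNr //.
Qed.
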